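(* For every integer $n\ge1$, with the polynomial matrix $N(x)$ defined below, $\operatorname{Pf}N(x)=(-1)^{n+1}\operatorname{Pf}N(-2n-1-x)$ as polynomials in $x$.
   Context: For an indeterminate $y$ and integer $k\ge0$, $\binom yk=y(y-1)\cdots(y-k+1)/k!$. For integers $i,j\ge1$ define the polynomials $R_{i,j}(x)=\sum_{\ell=0}^{i-1}\frac{j-i}{i}\binom{j-1}{i-1-\ell}\binom{\ell+j}{\ell}\binom{2x+2n+2}{\ell+j+1}$ and $T_{i,j}(x)=\binom{2x+2n+1}{i}\big(\binom{x+n}{j}+\binom{x+n+1}{j}\big)$. $N(x)$ is the $(2n+2)\times(2n+2)$ skew-symmetric matrix with $N_{i,j}(x)=R_{i,j}(x)+T_{i,j}(x)-T_{j,i}(x)$ for $1\le i,j\le 2n$, $N_{i,2n+1}(x)=\binom{2n+2x+1}{i}-\binom{n+x}{i}-\binom{n+x+1}{i}$ and $N_{i,2n+2}(x)=\binom{x+n}{i-1}$ for $1\le i\le 2n$, and $N_{2n+1,2n+2}(x)=0$. *)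

(* Defs.v *)
From HB Require Import structures.
From Stdlib Require Import Lia.
From mathcomp Require Import all_boot all_order all_fingroup all_algebra.
Set Implicit Arguments. Unset Strict Implicit. Unset Printing Implicit Defensive.
Import Order.TTheory GRing.Theory Num.Theory.
Local Open Scope ring_scope.

Definition pbinom (y : {poly rat}) (k : nat) : {poly rat} :=
  ((k`!)%:R^-1 : rat) *: \prod_(l < k) (y - l%:R).

Lemma ord2_proof m (i : 'I_m) (b : bool) : (i.*2 + b < m.*2)%N.
Proof.
have /ssrnat.leP hi := ltn_ord i.
apply/ssrnat.leP; rewrite -!addnn; case: b => /=; rewrite -?plusE; lia.
Qed.
Definition ord2 m (i : 'I_m) (b : bool) : 'I_(m.*2) := Ordinal (ord2_proof i b).

Definition pfaffian m (A : 'M[{poly rat}]_(m.*2)) : {poly rat} :=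
  (((2 ^ m * m`!)%N)%:R^-1 : rat) *:
    \sum_(s : 'S_(m.*2)) (-1) ^+ (odd_perm s) *
       \prod_(i < m) A (s (ord2 i false)) (s (ord2 i true)).

(* The polynomials R_{i,j}(x) and T_{i,j}(x) (1-based indices i j >= 1). *)
Definition Rpol (n : nat) (x : {poly rat}) (i j : nat) : {poly rat} :=
  \sum_(l < i)
    (((j%:R - i%:R) / i%:R : rat) *: ('C(j.-1, (i.-1 - l)%N) * 'C((l + j)%N, l))%:R)
      * pbinom (2%:R * x + (2 * n + 2)%N%:R) (l + j).+1.

Definition Tpol (n : nat) (x : {poly rat}) (i j : nat) : {poly rat} :=
  pbinom (2%:R * x + (2 * n + 1)%N%:R) i *
   (pbinom (x + n%:R) j + pbinom (x + n.+1%:R) j).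

(* Upper-triangular description of N (1-based indices), i < j or i,j <= 2n. *)
Definition Nentry (n : nat) (x : {poly rat}) (i j : nat) : {poly rat} :=
  if (i <= 2 * n)%N then
    if (j <= 2 * n)%N then Rpol n x i j + Tpol n x i j - Tpol n x j i
    else if j == (2 * n + 1)%N then
      pbinom (2%:R * x + (2 * n + 1)%N%:R) i - pbinom (x + n%:R) i
        - pbinom (x + n.+1%:R) i
    else (* j = 2n+2 *) pbinom (x + n%:R) i.-1
  else 0. (* N_{2n+1,2n+2} = 0 *)

Definition Nfull (n : nat) (x : {poly rat}) (i j : nat) : {poly rat} :=
  if i == j then 0
  else if ((i <= 2 * n) && (j <= 2 * n))%N || (i < j)%N then Nentry n x i j
  else - Nentry n x j i.

Definition Nmat (n : nat) (x : {poly rat}) : 'M[{poly rat}]_((n.+1).*2) :=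
  \matrix_(i, j) Nfull n x i.+1 j.+1.

(* Main.v *)
Require Import Defs.
From HB Require Import structures.
From mathcomp Require Import all_boot all_order all_fingroup all_algebra.
From mathcomp Require Import ring zify.
Set Implicit Arguments. Unset Strict Implicit. Unset Printing Implicit Defensive.
Import Order.TTheory GRing.Theory Num.Theory.
Local Open Scope ring_scope.

Definition ff (y : {poly rat}) k := \prod_(l < k) (y - l%:R).

Lemma pbinom0 y : pbinom y 0 = 1.
Proof. by rewrite /pbinom big_ord0 fact0 invr1 scale1r. Qed.

Lemma pbinomS y k :
  pbinom y k.+1 = ((k.+1)%:R^-1 : rat) *: ((y - k%:R) * pbinom y k).
Proof.
rewrite /pbinom big_ord_recr /= factS natrM invfM -scalerAr scalerA mulrC.
by rewrite [_ * (y - _)]mulrC.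
Qed.

Lemma pbinom_comp y q k : pbinom y k \Po q = pbinom (y \Po q) k.
Proof.
rewrite /pbinom linearZ /= rmorph_prod; congr (_ *: _).
by apply: eq_bigr => i _; rewrite rmorphB /= rmorph_nat.
Qed.

Lemma horner_natr (l : nat) (x : rat) : (l%:R : {poly rat}).[x] = l%:R.
Proof. by rewrite -polyC_natr hornerC. Qed.

Definition rbinom (r : rat) k := ((k`!)%:R^-1 : rat) * \prod_(l < k) (r - l%:R).

Lemma pbinom_horner y k x : (pbinom y k).[x] = rbinom y.[x] k.
Proof.
rewrite /pbinom /rbinom hornerZ horner_prod; congr (_ * _).
by apply: eq_bigr => i _; rewrite hornerD hornerN horner_natr.
Qed.

Lemma rbinom_nat m k : rbinom m%:R k = ('C(m, k))%:R.
Proof.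
rewrite /rbinom.
have -> : \prod_(l < k) ((m%:R : rat) - l%:R) = (m ^_ k)%:R.
  elim: k => [|k IH]; first by rewrite big_ord0 ffactn0.
  rewrite big_ord_recr /= IH ffactnSr natrM.
  have [lekm|ltmk] := leqP k m; first by rewrite natrB.
  by rewrite ffact_small // !mul0r.
rewrite -bin_ffact natrM mulrC mulfK //.
by rewrite pnatr_eq0 -lt0n fact_gt0.
Qed.

Lemma poly_nat_eq (p q : {poly rat}) :
  (forall m : nat, p.[m%:R] = q.[m%:R]) -> p = q.
Proof.
move=> H; apply/eqP; rewrite -subr_eq0; apply/eqP.
apply: (@roots_geq_poly_eq0 _ _ [seq (m%:R : rat) | m <- iota 0 (size (p - q))]).
- apply/allP => x /mapP [m _ ->]; by rewrite /root hornerD hornerN H subrr.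
- rewrite map_inj_uniq ?iota_uniq // => a b /eqP; rewrite eqr_nat => /eqP //.
- by rewrite size_map size_iota.
Qed.

Lemma pbinom_small c k : (c < k)%N -> pbinom c%:R k = 0.
Proof.
move=> H; rewrite /pbinom (bigD1 (Ordinal H)) //= subrr mul0r scaler0 //.
Qed.

Lemma pbinom_addn z c k :
  pbinom (z + c%:R) k = \sum_(l < k.+1) ('C(c, k - l))%:R * pbinom z l.
Proof.
have HX : pbinom ('X + c%:R) k = \sum_(l < k.+1) ('C(c, k - l))%:R * pbinom 'X l.
  apply: poly_nat_eq => m.
  rewrite pbinom_horner hornerD hornerX horner_natr -natrD rbinom_nat horner_sum.
  under eq_bigr do rewrite hornerM horner_natr pbinom_horner hornerX rbinom_nat -natrM.
  by rewrite -natr_sum -binomial.Vandermonde; congr _%:R; apply: eq_bigr => i _; rewrite mulnC.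
have := congr1 (comp_poly z) HX.
rewrite pbinom_comp rmorphD /= comp_polyX rmorph_nat => ->.
rewrite linear_sum /=; apply: eq_bigr => i _.
by rewrite rmorphM /= rmorph_nat pbinom_comp comp_polyX.
Qed.


Lemma pbinomN_gen z c k :
  pbinom (- z - c%:R) k = (-1) ^+ k * pbinom (z + (c + k.-1)%:R) k.
Proof.
rewrite /pbinom -scalerAr; congr (_ *: _).
rewrite [in RHS](reindex_inj rev_ord_inj) /=.
transitivity (\prod_(i < k) ((-1) * (z + (c + i)%:R))).
  by apply: eq_bigr => i _; rewrite natrD; ring.
rewrite big_split /= prodr_const card_ord; congr (_ * _).
apply: eq_bigr => i _.
have -> : (c + k.-1 = (c + i) + (k - i.+1))%N.
  have := ltn_ord i; lia.
by rewrite !natrD; ring.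
Qed.

Lemma sum_trunc (F : nat -> {poly rat}) k K : (k < K)%N ->
  (forall a, (k < a)%N -> F a = 0) ->
  \sum_(a < K) F a = \sum_(a < k.+1) F a.
Proof.
move=> hk H; rewrite (big_ord_widen _ _ hk) [RHS]big_mkcond /=.
apply: eq_bigr => i _; case: ifP => // /negbT; rewrite -leqNgt => hi.
by rewrite H.
Qed.

Lemma transf_N1 z k K : (k < K)%N ->
  \sum_(a < K) ((-1) ^+ k * ('C(k, a))%:R) * pbinom z a.+1 = - pbinom (- z) k.+1.
Proof.
move=> hk; rewrite (@sum_trunc (fun a => ((-1) ^+ k * ('C(k, a))%:R) * pbinom z a.+1) k K hk);
  last by move=> a ha; rewrite bin_small // mulr0 mul0r.
have := pbinomN_gen z 0 k.+1; rewrite subr0 => ->.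
rewrite add0n /= pbinom_addn [in RHS]big_ord_recl subn0 bin_small // mul0r add0r.
rewrite exprS mulN1r mulNr opprK mulr_sumr; apply: eq_bigr => i _.
rewrite /= subSS bin_sub; last by have := ltn_ord i.
by rewrite mulrA.
Qed.

Lemma transf_N2 z k K : (k < K)%N ->
  \sum_(a < K) ((-1) ^+ k * ('C(k, a))%:R) * pbinom z a = pbinom (- z - 1) k.
Proof.
move=> hk; rewrite (@sum_trunc (fun a => ((-1) ^+ k * ('C(k, a))%:R) * pbinom z a) k K hk);
  last by move=> a ha; rewrite bin_small // mulr0 mul0r.
have := pbinomN_gen z 1 k; rewrite mulr1n => ->.
have -> : pbinom (z + (1 + k.-1)%:R) k = pbinom (z + k%:R) k.
  by case: (k) => [|k']; rewrite ?pbinom0.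
rewrite pbinom_addn mulr_sumr; apply: eq_bigr => i _.
rewrite bin_sub; last by have := ltn_ord i.
by rewrite mulrA.
Qed.

Lemma pbinom_pascal y k : pbinom (y + 1) k.+1 = pbinom y k.+1 + pbinom y k.
Proof.
have HX : pbinom ('X + 1) k.+1 = pbinom 'X k.+1 + pbinom 'X k.
  apply: poly_nat_eq => m.
  rewrite hornerD !pbinom_horner hornerD hornerX -polyC1 hornerC.
  by rewrite natr1 !rbinom_nat binS natrD.
have := congr1 (comp_poly y) HX.
by rewrite !pbinom_comp rmorphD /= comp_polyX comp_polyC => ->; rewrite rmorphD /= !pbinom_comp comp_polyX.
Qed.

Lemma pbinomK z k : (k.+1%:R : rat) *: pbinom z k.+1 = (z - k%:R) * pbinom z k.
Proof.
rewrite pbinomS scalerA mulfV ?scale1r // pnatr_eq0 //.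
Qed.

Lemma ff_split y a b : ff y (a + b) = ff y a * ff (y - a%:R) b.
Proof.
rewrite /ff big_split_ord /=; congr (_ * _); apply: eq_bigr => i _.
by rewrite natrD opprD addrA.
Qed.

Lemma pbinom_split y a b :
  ('C(a + b, b))%:R * pbinom y (a + b) = pbinom y a * pbinom (y - a%:R) b.
Proof.
rewrite /pbinom -/(ff y (a + b)) -/(ff y a) -/(ff (y - a%:R) b) ff_split.
rewrite -polyC_natr mul_polyC scalerA -scalerAl -scalerAr scalerA; congr (_ *: _).
have H := bin_fact (leq_addl a b).
rewrite addnK in H.
have hf : forall t, (t`!%:R : rat) != 0 by move=> t; rewrite pnatr_eq0 -lt0n fact_gt0.
have hC : ('C(a + b, b)%:R : rat) != 0 by rewrite pnatr_eq0 -lt0n bin_gt0 leq_addl.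
rewrite -H !natrM; field.
by rewrite !hf hC.
Qed.

Definition Phi (y : {poly rat}) (i j : nat) : {poly rat} :=
  \sum_(l < i)
    (((j%:R - i%:R) / i%:R : rat) *: ('C(j.-1, (i.-1 - l)%N) * 'C((l + j)%N, l))%:R)
      * pbinom y (l + j).+1.

Lemma Rpol_Phi n x i j : Rpol n x i j = Phi (2%:R * x + (2 * n + 2)%N%:R) i j.
Proof. by []. Qed.

Definition hh (z : {poly rat}) (i j : nat) :=
  pbinom z i * pbinom z j.-1 - pbinom z j * pbinom z i.-1.

Lemma Phi_diff y i j : (0 < i)%N -> (0 < j)%N ->
  Phi (y + 1) i j = Phi y i j + hh (y - 1) i j.
Proof.
case: i => // i' _; case: j => // j' _.
set i := i'.+1; set j := j'.+1.
have -> : Phi (y + 1) i j = Phi y i j +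
   ((j%:R - i%:R) / i%:R : rat) *: \sum_(l < i) ('C(j', (i' - l)%N))%:R *
      (('C((l + j)%N, l))%:R * pbinom y (l + j)).
  rewrite /Phi scaler_sumr -big_split /=; apply: eq_bigr => l _.
  rewrite pbinom_pascal mulrDr; congr (_ + _).
  by rewrite -scalerAl natrM !mulrA.
congr (_ + _).
have -> : \sum_(l < i) ('C(j', (i' - l)%N))%:R *
      (('C((l + j)%N, l))%:R * pbinom y (l + j)) =
   pbinom y j * \sum_(l < i) ('C(j', (i' - l)%N))%:R * pbinom (y - j%:R) l.
  rewrite mulr_sumr; apply: eq_bigr => l _.
  by rewrite addnC pbinom_split mulrCA.
rewrite -pbinom_addn.
have -> : y - j%:R + j'%:R = y - 1 by rewrite /j -natr1; ring.
set z := y - 1.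
have hy : y = z + 1 by rewrite /z subrK.
rewrite hy pbinom_pascal /hh /= -/z.
have hi : (i%:R : rat) != 0 by rewrite pnatr_eq0.
apply: (scalerI hi); rewrite scalerA mulrCA mulfV // mulr1.
have Hi := pbinomK z i'.
have Hj := pbinomK z j'.
rewrite scaler_nat in Hi.
rewrite scaler_nat in Hj.
rewrite scalerBl !scaler_nat.
rewrite /i /j in Hi Hj *.
apply/eqP; rewrite -subr_eq0; apply/eqP.
transitivity ((pbinom z j'.+1 *+ j'.+1 - (z - j'%:R) * pbinom z j') * pbinom z i'
   - (pbinom z i'.+1 *+ i'.+1 - (z - i'%:R) * pbinom z i') * pbinom z j').
  move: (pbinom z j'.+1) (pbinom z j') (pbinom z i'.+1) (pbinom z i') => A B C D.
  clear hy hi Hi Hj; clearbody z; move: z => Z. ring.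
by rewrite Hi Hj !subrr !mul0r subrr.
Qed.


Lemma Phi_comp y q i j : Phi y i j \Po q = Phi (y \Po q) i j.
Proof.
rewrite /Phi linear_sum /=; apply: eq_bigr => l _.
by rewrite rmorphM /= linearZ /= rmorph_nat pbinom_comp.
Qed.

Lemma Phi1 i j : (0 < j)%N -> Phi 1 i j = 0.
Proof.
move=> hj; rewrite /Phi big1 // => l _.
have := @pbinom_small 1 (l + j).+1; rewrite mulr1n => ->; last by lia.
by rewrite mulr0.
Qed.

Lemma fun_zero (F : {poly rat} -> {poly rat}) :
  (forall y q, F y \Po q = F (y \Po q)) -> (forall y, F (y + 1) = F y) ->
  F 1 = 0 -> forall y, F y = 0.
Proof.
move=> Hc Hs H1.
have Hp : F 'X \Po ('X + 1) = F 'X by rewrite Hc comp_polyX Hs.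
have Hm : forall m : nat, (F 'X).[m%:R] = (F 'X).[0].
  elim=> [|m IH] //; rewrite -IH -[in LHS]natr1.
  by rewrite -[in RHS]Hp horner_comp hornerD hornerX hornerC.
have H0 : (F 'X).[0] = 0.
  rewrite -(Hm 1%N) mulr1n; apply: polyC_inj.
  by rewrite -comp_polyCr polyC1 Hc comp_polyX H1.
have HX : F 'X = 0 by apply: poly_nat_eq => m; rewrite Hm H0 horner0.
by move=> y; rewrite -[y]comp_polyX -Hc HX comp_poly0.
Qed.

Definition cc (i a : nat) : {poly rat} := (-1) ^+ i * ('C(i, a))%:R.

Definition Psi y i j K :=
  \sum_(a < K) \sum_(b < K) (cc i a * cc j b) * Phi y a.+1 b.+1.

Lemma R_transf y i j K : (i < K)%N -> (j < K)%N ->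
  Psi y i j K = Phi (2 - y) i.+1 j.+1.
Proof.
move=> hi hj.
pose F := fun y => Psi y i j K - Phi (2 - y) i.+1 j.+1.
suff : F y = 0 by move/eqP; rewrite subr_eq0 => /eqP.
apply: fun_zero => {y} [y q | y |].
- rewrite /F rmorphB /= Phi_comp rmorphB /= rmorph_nat; congr (_ - _).
  rewrite /Psi linear_sum; apply: eq_bigr => a _.
  rewrite linear_sum; apply: eq_bigr => b _.
  by rewrite rmorphM /= Phi_comp /cc !rmorphM /= !rmorphXn /= !rmorphN1 !rmorph_nat.
- have E1 : Psi (y + 1) i j K = Psi y i j K +
      \sum_(a < K) \sum_(b < K) (cc i a * cc j b) * hh (y - 1) a.+1 b.+1.
    rewrite /Psi -big_split; apply: eq_bigr => a _.
    by rewrite -big_split; apply: eq_bigr => b _; rewrite Phi_diff // mulrDr.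
  have E2 : Phi (2 - y) i.+1 j.+1 = Phi (1 - y) i.+1 j.+1 + hh (- y) i.+1 j.+1.
    have -> : 2 - y = (1 - y) + 1 by ring.
    by rewrite Phi_diff //; congr (_ + hh _ _ _); ring.
  have E3 : 2 - (y + 1) = 1 - y by ring.
  have HS : \sum_(a < K) \sum_(b < K) (cc i a * cc j b) * hh (y - 1) a.+1 b.+1
      = - hh (- y) i.+1 j.+1.
    set z := y - 1.
    transitivity ((\sum_(a < K) cc i a * pbinom z a.+1) * (\sum_(b < K) cc j b * pbinom z b)
       - (\sum_(a < K) cc i a * pbinom z a) * (\sum_(b < K) cc j b * pbinom z b.+1)).
      rewrite !big_distrlr -sumrB; apply: eq_bigr => a _.
      rewrite -sumrB; apply: eq_bigr => b _; rewrite /hh /=.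
      move: (cc i a) (cc j b) (pbinom z a.+1) (pbinom z b) (pbinom z b.+1) (pbinom z a).
      by move=> c1 c2 p1 p2 p3 p4; ring.
    rewrite /cc !transf_N1 // !transf_N2 //.
    have -> : - z - 1 = - y by rewrite /z; ring.
    have -> : - z = - y + 1 by rewrite /z; ring.
    rewrite !pbinom_pascal /hh /=.
    move: (pbinom (- y) i.+1) (pbinom (- y) i) (pbinom (- y) j.+1) (pbinom (- y) j).
    by move=> p1 p2 p3 p4; ring.
  rewrite /F E1 E2 E3 HS.
  move: (Psi y i j K) (Phi (1 - y) i.+1 j.+1) (hh (- y) i.+1 j.+1) => p1 p2 p3; ring.
- rewrite /F /Psi big1 => [|a _]; last by rewrite big1 // => b _; rewrite Phi1 // mulr0.
  have -> : (2 : {poly rat}) - 1 = 1 by ring.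
  by rewrite Phi1 // subrr.
Qed.

Section Pf.
Variable m : nat.
Local Notation M := ('M[{poly rat}]_(m.*2)).

Lemma half_proof (k : 'I_(m.*2)) : (k./2 < m)%N.
Proof. by rewrite ltn_half_double. Qed.
Definition halfo (k : 'I_(m.*2)) : 'I_m := Ordinal (half_proof k).

Lemma half_ord2 (i : 'I_m) b : halfo (ord2 i b) = i.
Proof. by apply: val_inj; rewrite /= addnC half_bit_double. Qed.

Lemma odd_ord2 (i : 'I_m) b : odd (ord2 i b) = b.
Proof. by rewrite /= oddD odd_double; case: b. Qed.

Lemma ord2_half (k : 'I_(m.*2)) : ord2 (halfo k) (odd k) = k.
Proof. by apply: val_inj; rewrite /= addnC odd_double_half. Qed.

Lemma prod_split (G : 'I_(m.*2) -> {poly rat}) :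
  \prod_(k < m.*2) G k = \prod_(i < m) (G (ord2 i false) * G (ord2 i true)).
Proof.
rewrite (reindex (fun p : 'I_m * bool => ord2 p.1 p.2)) /=; last first.
  exists (fun k => (halfo k, odd k)) => [[i b] _ | k _] /=.
    by rewrite half_ord2 odd_ord2.
  by rewrite ord2_half.
rewrite -(pair_big xpredT xpredT (fun i b => G (ord2 i b))) /=.
by apply: eq_bigr => i _; rewrite big_bool mulrC.
Qed.

Definition Spf (A : M) : {poly rat} :=
  \sum_(s : 'S_(m.*2)) (-1) ^+ (odd_perm s) *
       \prod_(i < m) A (s (ord2 i false)) (s (ord2 i true)).

Definition fF (F : {ffun 'I_m -> 'I_(m.*2) * 'I_(m.*2)}) (k : 'I_(m.*2)) :=
  if odd k then (F (halfo k)).2 else (F (halfo k)).1.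

Lemma fF_ord2 F i b : fF F (ord2 i b) = if b then (F i).2 else (F i).1.
Proof. by rewrite /fF odd_ord2 half_ord2. Qed.

Definition Mf (F : {ffun 'I_m -> 'I_(m.*2) * 'I_(m.*2)}) : M :=
  \matrix_(r, k) ((fF F k == r)%:R).

Lemma congr_entry (P A : M) x y :
  (P *m A *m P^T) x y = \sum_(p : 'I_(m.*2) * 'I_(m.*2)) P x p.1 * A p.1 p.2 * P y p.2.
Proof.
rewrite mxE.
under eq_bigr => k _ do rewrite !mxE mulr_suml.
rewrite exchange_big /= pair_bigA /=.
by apply: eq_bigr => -[c d] _.
Qed.

Lemma S_congr (P A : M) :
  Spf (P *m A *m P^T) = \sum_(F : {ffun 'I_m -> 'I_(m.*2) * 'I_(m.*2)})
     (\prod_(i < m) A (F i).1 (F i).2) * (\det P * \det (Mf F)).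
Proof.
rewrite /Spf.
under eq_bigr => s _ do rewrite (eq_bigr _ (fun i _ => congr_entry _ _ _ _)) bigA_distr_bigA mulr_sumr.
rewrite exchange_big /=; apply: eq_bigr => F _.
have HM : P *m Mf F = \matrix_(r, k) P r (fF F k).
  apply/matrixP => r k; rewrite !mxE (bigD1 (fF F k)) //= mxE eqxx mulr1 big1 ?addr0 //.
  by move=> c /negbTE hc; rewrite mxE eq_sym hc mulr0.
rewrite -det_mulmx HM -det_tr /determinant mulr_sumr; apply: eq_bigr => s _.
rewrite mulrCA; congr (_ * _).
rewrite (prod_split (fun k => _)) -big_split /=; apply: eq_bigr => i _.
by rewrite !mxE !fF_ord2; ring.
Qed.

Lemma S_congr_det (P A : M) : Spf (P *m A *m P^T) = \det P * Spf A.
Proof.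
have -> : Spf A = Spf (1%:M *m A *m (1%:M)^T) by rewrite mul1mx trmx1 mulmx1.
rewrite !S_congr mulr_sumr; apply: eq_bigr => F _.
by rewrite det1 mul1r mulrCA.
Qed.

End Pf.

Lemma pf_congr m (P A : 'M[{poly rat}]_(m.*2)) :
  pfaffian (P *m A *m P^T) = \det P * pfaffian A.
Proof.
rewrite /pfaffian -/(Spf (P *m A *m P^T)) -/(Spf A) S_congr_det.
by rewrite scalerAr.
Qed.

Section Main.
Variable n : nat.

Definition fv (x : {poly rat}) (k : nat) : {poly rat} :=
  if (k < n.*2)%N then pbinom (2%:R * x + (2 * n + 1)%N%:R) k.+1
  else if k == n.*2 then 1 else 0.
Definition gv (x : {poly rat}) (k : nat) : {poly rat} :=
  if (k < n.*2)%N then pbinom (x + n%:R) k.+1 + pbinom (x + n.+1%:R) k.+1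
  else if k == n.*2 then 1 else 0.
Definition dv (x : {poly rat}) (k : nat) : {poly rat} :=
  if (k < n.*2)%N then pbinom (x + n%:R) k else 0.
Definition ev (k : nat) : {poly rat} := (k == n.*2.+1)%:R.
Definition Rv (x : {poly rat}) (k l : nat) : {poly rat} :=
  if (k < n.*2)%N && (l < n.*2)%N then Rpol n x k.+1 l.+1 else 0.

Lemma Rpol_diag x i : Rpol n x i i = 0.
Proof. by rewrite /Rpol big1 // => l _; rewrite subrr mul0r scale0r mul0r. Qed.

Lemma Nmat_decomp x : Nmat n x = \matrix_(i, j)
  (Rv x i j + fv x i * gv x j - gv x i * fv x j + dv x i * ev j - ev i * dv x j).
Proof.
apply/matrixP => i j; rewrite !mxE /Nfull /Nentry /Rv /fv /gv /dv /ev /Tpol.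
have hi := ltn_ord i; have hj := ltn_ord j.
rewrite !mul2n.
move: (nat_of_ord i) (nat_of_ord j) hi hj => {i j} i j hi hj.
have h2 : (n.+1).*2 = n.*2.+2 by [].
rewrite h2 in hi hj.
have ej : (j == n.*2.+1) = (n.*2 < j)%N by apply/eqP/idP; lia.
have ei : (i == n.*2.+1) = (n.*2 < i)%N by apply/eqP/idP; lia.
rewrite ei ej !eqSS !ltnS addn1.
case: (ltngtP i n.*2) => Hi; case: (ltngtP j n.*2) => Hj.
all: rewrite ?mulr0 ?mul0r ?mulr1 ?mul1r ?addr0 ?subr0 ?oppr0 /=.
- case: eqP => [->|_]; last by ring.
  by rewrite Rpol_diag; ring.
- rewrite (_ : (i == j) = false); last by apply/eqP; lia.
  rewrite (_ : (i < j)%N = true); last by lia.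
  rewrite (_ : (j.+1 == n.*2.+1) = false); last by apply/eqP; lia.
  by rewrite add0r.
- rewrite (_ : (i == j) = false); last by apply/eqP; lia.
  rewrite (_ : (i < j)%N = true); last by lia.
  rewrite Hj eqxx; ring.
- rewrite (_ : (i == j) = false); last by apply/eqP; lia.
  rewrite (_ : (i < j)%N = false); last by lia.
  rewrite (_ : (i.+1 == n.*2.+1) = false); last by apply/eqP; lia.
  by rewrite add0r.
- by case: ifP => //; case: ifP.
- by case: ifP => //; case: ifP.
- rewrite (_ : (i == j) = false); last by apply/eqP; lia.
  rewrite (_ : (i < j)%N = false); last by lia.
  rewrite Hi eqxx; ring.
- by case: ifP => //; case: ifP.
- by rewrite Hi Hj eqxx; ring.
Qed.

Definition Pm : 'M[{poly rat}]_((n.+1).*2) := \matrix_(i, k)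
  (if (i < n.*2)%N && (k < n.*2)%N then cc i k
   else if (i == k :> nat) then (if (i == n.*2 :> nat) then -1 else 1) else 0).

Definition PV (v : nat -> {poly rat}) (i : nat) : {poly rat} :=
  if (i < n.*2)%N then \sum_(k < n.*2) cc i k * v k
  else if i == n.*2 then - v n.*2 else v n.*2.+1.

Lemma sum_ext (G : nat -> {poly rat}) :
  \sum_(k < (n.+1).*2) G k = \sum_(k < n.*2) G k + G n.*2 + G n.*2.+1.
Proof. by rewrite big_ord_recr big_ord_recr. Qed.

Lemma Pm_apply (v : nat -> {poly rat}) (i : 'I_((n.+1).*2)) :
  \sum_k Pm i k * v k = PV v i.
Proof.
pose G := fun k : nat => (if (i < n.*2)%N && (k < n.*2)%N then cc i k
   else if (i == k :> nat) then (if (i == n.*2 :> nat) then -1 else 1) else 0) * v k.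
transitivity (\sum_(k < (n.+1).*2) G k); first by apply: eq_bigr => k _; rewrite mxE.
rewrite sum_ext /G /PV.
rewrite (_ : (n.*2.+1 < n.*2)%N = false); last by lia.
rewrite andbF.
have hi := ltn_ord i.
case: (ltngtP i n.*2) => Hi /=.
- rewrite ltnn (_ : (i == n.*2.+1 :> nat) = false); last by apply/eqP; lia.
  rewrite !mul0r !addr0; apply: eq_bigr => k _; by rewrite (ltn_ord k).
- have ei : (i : nat) = n.*2.+1 by lia.
  rewrite ei eqxx big1 => [|k _]; last first.
    rewrite (_ : (n.*2.+1 == k) = false) ?mul0r //.
    by apply/eqP; have := ltn_ord k; lia.
  by rewrite mul1r mul0r !add0r.
- rewrite Hi big1 => [|k _]; last first.
    rewrite (_ : (n.*2 == k) = false) ?mul0r //.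
    by apply/eqP; have := ltn_ord k; lia.
  rewrite (_ : (n.*2 == n.*2.+1) = false); last by apply/eqP; lia.
  by rewrite mul0r addr0 add0r mulN1r.
Qed.

Definition outer (v w : nat -> {poly rat}) : 'M[{poly rat}]_((n.+1).*2) :=
  \matrix_(i, j) (v i * w j).

Lemma outer_congr v w : Pm *m outer v w *m Pm^T = outer (PV v) (PV w).
Proof.
apply/matrixP => i j; rewrite congr_entry mxE -(Pm_apply v i) -(Pm_apply w j).
rewrite big_distrlr pair_bigA /=; apply: eq_bigr => -[a b] _ /=.
by rewrite [outer _ _ _ _]mxE; move: (Pm i a) (Pm j b) (v a) (w b) => p q r t; ring.
Qed.

Definition RvM x : 'M[{poly rat}]_((n.+1).*2) := \matrix_(i, j) Rv x i j.

Lemma PV0 v i : (forall k, v k = 0) -> PV v i = 0.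
Proof.
move=> H; rewrite /PV !H oppr0 big1 ?if_same // => k _.
by rewrite H mulr0.
Qed.

Lemma PV_hi v i : (n.*2 <= i)%N -> PV v i = if i == n.*2 then - v n.*2 else v n.*2.+1.
Proof. by move=> H; rewrite /PV ltnNge H. Qed.

Lemma PV_lo v i : (i < n.*2)%N -> PV v i = \sum_(k < n.*2) cc i k * v k.
Proof. by move=> H; rewrite /PV H. Qed.

Lemma R_congr x x' : x' = - ((2 * n + 1)%N%:R) - x ->
  Pm *m RvM x *m Pm^T = RvM x'.
Proof.
move=> hx; apply/matrixP => i j; rewrite congr_entry.
transitivity (\sum_(a < (n.+1).*2) Pm i a * (\sum_(b < (n.+1).*2) Pm j b * Rv x a b)).
  rewrite -(pair_bigA _ (fun a b => Pm i a * RvM x a b * Pm j b)) /=; apply: eq_bigr => a _; rewrite mulr_sumr.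
  by apply: eq_bigr => b _; rewrite [RvM _ _ _]mxE; move: (Pm i a) (Pm j b) (Rv x a b) => p q r; ring.
under eq_bigr => a _ do rewrite (Pm_apply (fun b => Rv x a b) j).
rewrite (Pm_apply (fun a => PV (fun b => Rv x a b) j) i) mxE.
have hi := ltn_ord i; have hj := ltn_ord j.
rewrite /Rv; case: (ltnP i n.*2) => Hi; last first.
  have Hz : forall a, (n.*2 <= a)%N -> PV (fun b => Rv x a b) j = 0.
    by move=> a ha; apply: PV0 => k; rewrite /Rv ltnNge ha.
  by rewrite (PV_hi _ Hi) !Hz ?oppr0 ?if_same // ltnNge Hi.
rewrite (PV_lo _ Hi) /=; case: (ltnP j n.*2) => Hj; last first.
  rewrite big1 // => a _; rewrite (PV_hi _ Hj) /Rv (ltn_ord a) /= ltnn.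
  by rewrite (_ : (n.*2.+1 < n.*2)%N = false) ?oppr0 ?if_same ?mulr0 //; lia.
under eq_bigr => a _ do rewrite (PV_lo _ Hj) /Rv (ltn_ord a) /=.
transitivity (Psi (2%:R * x + (2 * n + 2)%N%:R) i j n.*2).
  rewrite /Psi; apply: eq_bigr => a _; rewrite mulr_sumr; apply: eq_bigr => b _.
  by rewrite (ltn_ord b) mulrA.
rewrite R_transf // Rpol_Phi; congr Phi.
by rewrite hx !natrD ?natrM; ring.
Qed.

Section PVs.
Variables x x' : {poly rat}.
Hypothesis hx : x' = - ((2 * n + 1)%N%:R) - x.

Lemma PV_f i : (i < n.*2.+2)%N -> PV (fv x) i = - fv x' i.
Proof.
move=> hi; case: (ltngtP i n.*2) => Hi.
- rewrite (PV_lo _ Hi) /fv Hi.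
  under eq_bigr => k _ do rewrite (ltn_ord k).
  rewrite /cc transf_N1 //; congr (- pbinom _ _).
  by rewrite hx !natrD ?natrM; ring.
-
  have F1 : (i < n.*2)%N = false by lia.
  have F2 : (i == n.*2) = false by apply/eqP; lia.
  have F3 : (n.*2.+1 < n.*2)%N = false by lia.
  have F4 : (n.*2.+1 == n.*2) = false by apply/eqP; lia.
  have F5 : (i == n.*2.+1) = true by apply/eqP; lia.
  by rewrite (PV_hi _ (ltnW Hi)) /fv ?F1 ?F2 ?F3 ?F4 ?oppr0.
- by rewrite (PV_hi _ (eq_leq (esym Hi))) /fv Hi eqxx ltnn.
Qed.

Lemma PV_g i : (i < n.*2.+2)%N -> PV (gv x) i = - gv x' i.
Proof.
move=> hi; case: (ltngtP i n.*2) => Hi.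
- rewrite (PV_lo _ Hi) /gv Hi.
  under eq_bigr => k _ do rewrite (ltn_ord k) mulrDr.
  rewrite big_split /= /cc !transf_N1 //.
  have -> : - (x + n%:R) = x' + n.+1%:R by rewrite hx -natr1 !natrD ?natrM; ring.
  have -> : - (x + n.+1%:R) = x' + n%:R by rewrite hx -natr1 !natrD ?natrM; ring.
  by rewrite opprD addrC.
-
  have F1 : (i < n.*2)%N = false by lia.
  have F2 : (i == n.*2) = false by apply/eqP; lia.
  have F3 : (n.*2.+1 < n.*2)%N = false by lia.
  have F4 : (n.*2.+1 == n.*2) = false by apply/eqP; lia.
  have F5 : (i == n.*2.+1) = true by apply/eqP; lia.
  by rewrite (PV_hi _ (ltnW Hi)) /gv ?F1 ?F2 ?F3 ?F4 ?oppr0.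
- by rewrite (PV_hi _ (eq_leq (esym Hi))) /gv Hi eqxx ltnn.
Qed.

Lemma PV_d i : (i < n.*2.+2)%N -> PV (dv x) i = dv x' i.
Proof.
move=> hi; case: (ltngtP i n.*2) => Hi.
- rewrite (PV_lo _ Hi) /dv Hi.
  under eq_bigr => k _ do rewrite (ltn_ord k).
  rewrite /cc transf_N2 //; congr (pbinom _ _).
  by rewrite hx !natrD ?natrM; ring.
-
  have F1 : (i < n.*2)%N = false by lia.
  have F2 : (i == n.*2) = false by apply/eqP; lia.
  have F3 : (n.*2.+1 < n.*2)%N = false by lia.
  have F4 : (n.*2.+1 == n.*2) = false by apply/eqP; lia.
  have F5 : (i == n.*2.+1) = true by apply/eqP; lia.
  by rewrite (PV_hi _ (ltnW Hi)) /dv ?F1 ?F2 ?F3 ?F4 ?oppr0 ?if_same.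
- by rewrite (PV_hi _ (eq_leq (esym Hi))) /dv Hi eqxx ltnn oppr0.
Qed.

Lemma PV_e i : (i < n.*2.+2)%N -> PV ev i = ev i.
Proof.
move=> hi; case: (ltngtP i n.*2) => Hi.
- rewrite (PV_lo _ Hi) /ev big1 => [|k _].
    by rewrite (_ : (i == n.*2.+1) = false) //; apply/eqP; lia.
  by rewrite (_ : (k == n.*2.+1 :> nat) = false) ?mulr0 //; apply/eqP; have := ltn_ord k; lia.
-
  have F1 : (i < n.*2)%N = false by lia.
  have F2 : (i == n.*2) = false by apply/eqP; lia.
  have F3 : (n.*2.+1 < n.*2)%N = false by lia.
  have F4 : (n.*2.+1 == n.*2) = false by apply/eqP; lia.
  have F5 : (i == n.*2.+1) = true by apply/eqP; lia.
  by rewrite (PV_hi _ (ltnW Hi)) /ev ?F2 F5 eqxx.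
- rewrite (PV_hi _ (eq_leq (esym Hi))) /ev Hi eqxx.
  by rewrite (_ : (n.*2 == n.*2.+1) = false) ?oppr0 //; apply/eqP; lia.
Qed.

Lemma Nmat_congr : Pm *m Nmat n x *m Pm^T = Nmat n x'.
Proof.
have E : forall y, Nmat n y = RvM y + outer (fv y) (gv y) - outer (gv y) (fv y)
     + outer (dv y) ev - outer ev (dv y).
  by move=> y; rewrite Nmat_decomp; apply/matrixP => i j; rewrite !mxE.
rewrite !E !mulmxDr !mulmxN !mulmxDl !mulNmx !outer_congr (R_congr hx).
congr (_ + _ - _ + _ - _); apply/matrixP => i j; rewrite !mxE;
  have hi : (i < n.*2.+2)%N := ltn_ord i; have hj : (j < n.*2.+2)%N := ltn_ord j.
- by rewrite (PV_f hi) (PV_g hj) mulrNN.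
- by rewrite (PV_g hi) (PV_f hj) mulrNN.
- by rewrite (PV_d hi) (PV_e hj).
- by rewrite (PV_e hi) (PV_d hj).
Qed.

End PVs.

Lemma prod_sign k : \prod_(i < k.*2) ((-1) ^+ i : {poly rat}) = (-1) ^+ k.
Proof.
elim: k => [|k IH]; first by rewrite big_ord0.
rewrite (_ : k.+1.*2 = k.*2.+2) // big_ord_recr big_ord_recr /= IH.
rewrite -!exprD -signr_odd [in RHS]oddS.
rewrite -[LHS]signr_odd; congr (_ ^+ _); rewrite !oddD oddS odd_double /=.
by case: (odd k).
Qed.
Lemma det_Pm : \det Pm = (-1) ^+ n.+1.
Proof.
rewrite det_trig; last first.
  apply/is_trig_mxP => i j hij; rewrite mxE.
  case: ifP => [_|_]; first by rewrite /cc bin_small // mulr0.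
  by rewrite (_ : (i == j :> nat) = false) //; apply/eqP; lia.
transitivity (\prod_(i < (n.+1).*2) (if (i < n.*2)%N then ((-1) ^+ i : {poly rat})
   else if (i == n.*2 :> nat) then -1 else 1)).
  apply: eq_bigr => i _; rewrite mxE eqxx andbb.
  by case: ifP => // _; rewrite /cc binn mulr1.
rewrite big_ord_recr big_ord_recr /= ltnn eqxx (_ : (n.*2.+1 < n.*2)%N = false); last by lia.
rewrite (_ : (n.*2.+1 == n.*2) = false); last by apply/eqP; lia.
rewrite mulr1 exprS mulrC; congr (_ * _).
by rewrite -prod_sign; apply: eq_bigr => i _; rewrite (ltn_ord i).
Qed.

End Main.

Theorem mainTheorem11 (n : nat) (hn : (1 <= n)%N) :
  pfaffian (Nmat n 'X) =
  (-1) ^+ n.+1 * pfaffian (Nmat n (- ((2 * n + 1)%N%:R) - 'X)).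
Proof.
rewrite -(@Nmat_congr n 'X (- ((2 * n + 1)%N%:R) - 'X)) // pf_congr det_Pm mulrA -exprD addnn.
by rewrite -signr_odd odd_double expr0 mul1r.
Qed.
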